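(* For every finite zero-set $\mathcal Z$ and every $(\alpha,\beta)\in[0,1]^2$, $$I(\alpha,\beta,\mathcal Z)\le(1-\max(\alpha,\beta))\,|\mathcal Z|\qquad\text{and}\qquad I(\alpha,\beta,\mathcal Z)\le2(1-\min(\alpha,\beta))\,\gamma(\mathcal Z).$$
   Context: $\mathbb Z_+=\{0,1,2,\dots\}$, $R_{a,b}=([0,a-1]\times[0,b-1])\cap\mathbb Z_+^2$; a zero-set is a union of such rectangles. $\mathrm{row}(x,A),\mathrm{col}(x,A)$ count points of $A$ on the horizontal/vertical line through $x$; $\mathcal T(A)=A\cup\{x\notin A:(\mathrm{row}(x,A),\mathrm{col}(x,A))\notin\mathcal Z\}$; $A$ spans if $\bigcup_t\mathcal T^t(A)=\mathbb Z_+^2$; $\gamma(\mathcal Z)$ is the minimal size of a finite spanning set. Large deviation rate: for $\alpha,\beta\ge0$, as $p\to0$ let integers $N,M\to\infty$ with $\log N\sim-\alpha\log p$, $\log M\sim-\beta\log p$; the initial set contains each point of $R_{N,M}$ independently with probability $p$; $I(\alpha,\beta,\mathcal Z)=\lim_{p\to0}\log P_p(\text{initial set spans})/\log p$ (this limit exists). *)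

(* Defs.v *)
From Stdlib Require Import Reals List Classical ClassicalDescription.
Import ListNotations.
Open Scope R_scope.

Definition point := (nat * nat)%type.
Definition pset := point -> Prop.

Definition rect (a b : nat) (x : point) : Prop :=
  (fst x < a)%nat /\ (snd x < b)%nat.

(* A finite zero-set, given as a duplicate-free list of its points:
   it is a union of rectangles R_{a,b}. *)
Definition is_finite_zero_set (Z : list point) : Prop :=
  NoDup Z /\
  forall z, In z Z -> exists a b, rect a b z /\ forall w, rect a b w -> In w Z.

Definition card_eq (P : nat -> Prop) (r : nat) : Prop :=
  exists l : list nat, NoDup l /\ length l = r /\ forall u, In u l <-> P u.

(* row(x,A): points of A on the horizontal line through x (same 2nd coord);
   col(x,A): points of A on the vertical line through x (same 1st coord).
   (row,col) in Z requires both counts to be finite and equal to a pair of Z;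
   an infinite count is never in Z. *)
Definition count_in_Z (Z : list point) (A : pset) (x : point) : Prop :=
  exists r c, In (r, c) Z /\
    card_eq (fun u => A (u, snd x)) r /\ card_eq (fun v => A (fst x, v)) c.

Definition Tstep (Z : list point) (A : pset) : pset :=
  fun x => A x \/ (~ A x /\ ~ count_in_Z Z A x).

Fixpoint Titer (Z : list point) (t : nat) (A : pset) : pset :=
  match t with O => A | S t' => Tstep Z (Titer Z t' A) end.

Definition spans (Z : list point) (A : pset) : Prop :=
  forall x, exists t, Titer Z t A x.

Definition set_of_list (l : list point) : pset := fun x => In x l.

Definition is_gamma (Z : list point) (g : nat) : Prop :=
  (exists A : list point, NoDup A /\ length A = g /\ spans Z (set_of_list A)) /\
  (forall A : list point, NoDup A -> spans Z (set_of_list A) -> (g <= length A)%nat).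

Definition rect_list (N M : nat) : list point := list_prod (seq 0 N) (seq 0 M).

Fixpoint masks (n : nat) : list (list bool) :=
  match n with
  | O => [[]]
  | S n' => map (cons true) (masks n') ++ map (cons false) (masks n')
  end.

Definition mask_set (pts : list point) (m : list bool) : pset :=
  fun x => exists i, nth_error pts i = Some x /\ nth_error m i = Some true.

Fixpoint mask_weight (p : R) (m : list bool) : R :=
  match m with
  | [] => 1
  | b :: m' => (if b then p else 1 - p) * mask_weight p m'
  end.

Definition indicator (P : Prop) : R :=
  if excluded_middle_informative P then 1 else 0.

(* P_p(initial set spans): each point of R_{N,M} included independently w.p. p *)
Definition Pspan (Z : list point) (N M : nat) (p : R) : R :=
  let pts := rect_list N M in
  fold_right Rplus 0
    (map (fun m => mask_weight p m * indicator (spans Z (mask_set pts m)))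
         (masks (length pts))).

Definition lim0 (f : R -> R) (L : R) : Prop :=
  forall eps, 0 < eps -> exists delta, 0 < delta /\
    forall p, 0 < p < delta -> Rabs (f p - L) < eps.

Definition to_infty0 (f : R -> R) : Prop :=
  forall K, exists delta, 0 < delta /\ forall p, 0 < p < delta -> K < f p.

(* Main.v *)
Require Import Defs.
From Stdlib Require Import Reals List.
From Stdlib Require Import Lia Lra Classical ClassicalDescription IndefiniteDescription.
Import ListNotations.
Open Scope R_scope.

Definition fin_le (P : nat -> Prop) (r : nat) : Prop :=
  forall l, NoDup l -> (forall u, In u l -> P u) -> (length l <= r)%nat.

Lemma card_fin_le P r : card_eq P r -> fin_le P r.
Proof.
  intros [l0 [Hn [Hl Hi]]] l Hl1 Hp. subst r.
  apply NoDup_incl_length; auto. intros u Hu. apply Hi. auto.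
Qed.

Lemma card_ge P r l : card_eq P r -> NoDup l -> (forall u, In u l -> P u) -> (length l <= r)%nat.
Proof. intros H; apply card_fin_le; auto. Qed.

Lemma fin_le_card P r : fin_le P r -> exists k, (k <= r)%nat /\ card_eq P k.
Proof.
  intros H.
  assert (Hgen : forall d l, NoDup l -> (forall u, In u l -> P u) -> (r - length l <= d)%nat ->
            exists k, (k <= r)%nat /\ card_eq P k).
  { induction d; intros l Hn Hp Hd.
    - destruct (classic (forall u, P u -> In u l)) as [Hall|Hn2].
      + exists (length l). split. apply H; auto. exists l. split; auto. split; auto.
        intros u; split; auto.
      + apply not_all_ex_not in Hn2. destruct Hn2 as [u Hu].
        apply imply_to_and in Hu. destruct Hu as [Pu Nu].
        assert (Hc := H (u :: l) (NoDup_cons _ Nu Hn)).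
        assert (length (u::l) <= r)%nat by (apply Hc; intros v [->|Hv]; auto).
        simpl in *. lia.
    - destruct (classic (forall u, P u -> In u l)) as [Hall|Hn2].
      + exists (length l). split. apply H; auto. exists l. split; auto. split; auto.
        intros u; split; auto.
      + apply not_all_ex_not in Hn2. destruct Hn2 as [u Hu].
        apply imply_to_and in Hu. destruct Hu as [Pu Nu].
        assert (Hc := H (u :: l) (NoDup_cons _ Nu Hn)).
        assert (length (u::l) <= r)%nat by (apply Hc; intros v [->|Hv]; auto).
        apply (IHd (u::l)). constructor; auto. intros v [->|Hv]; auto. simpl in *. lia. }
  apply (Hgen r []). constructor. intros u []. simpl; lia.
Qed.

Lemma card_iff P Q r : (forall u, P u <-> Q u) -> card_eq P r -> card_eq Q r.
Proof.
  intros H [l [Hn [Hl Hi]]]. exists l. split; auto. split; auto.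
  intros u. rewrite Hi. apply H.
Qed.

Lemma card_infinite P B r : (forall w, (B <= w)%nat -> P w) -> ~ card_eq P r.
Proof.
  intros H Hc. assert (Hl := card_ge P r (seq B (S r)) Hc (seq_NoDup _ _)).
  rewrite length_seq in Hl. assert (S r <= r)%nat; [apply Hl|lia].
  intros u Hu. apply in_seq in Hu. apply H. lia.
Qed.

Lemma zs_down Z r c r' c' : is_finite_zero_set Z -> In (r,c) Z -> (r' <= r)%nat -> (c' <= c)%nat ->
  In (r',c') Z.
Proof.
  intros [_ H] Hin H1 H2. destruct (H _ Hin) as [a [b [[Ha Hb] Hw]]].
  apply Hw. unfold rect; simpl in *. lia.
Qed.

Lemma list_bound (Z : list point) : exists Bd, forall z, In z Z -> (fst z < Bd)%nat /\ (snd z < Bd)%nat.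
Proof.
  induction Z as [|z Z [Bd IH]].
  - exists 0%nat. intros z [].
  - exists (S (Nat.max Bd (Nat.max (fst z) (snd z)))). intros w [<-|Hw].
    + lia.
    + destruct (IH w Hw). lia.
Qed.

Definition dom (P Q : nat -> Prop) : Prop :=
  forall l, NoDup l -> (forall u, In u l -> P u) ->
    exists l', NoDup l' /\ length l' = length l /\ (forall u, In u l' -> Q u).

Lemma dom_card P Q r : dom P Q -> card_eq Q r -> exists k, (k <= r)%nat /\ card_eq P k.
Proof.
  intros Hd Hc. apply fin_le_card. intros l Hn Hp.
  destruct (Hd l Hn Hp) as [l' [Hn' [Hl' Hq]]]. rewrite <- Hl'.
  eapply card_ge; eauto.
Qed.

Lemma dom_count Z A B x : is_finite_zero_set Z ->
  dom (fun u => A (u, snd x)) (fun u => B (u, snd x)) ->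
  dom (fun v => A (fst x, v)) (fun v => B (fst x, v)) ->
  count_in_Z Z B x -> count_in_Z Z A x.
Proof.
  intros HZ H1 H2 [r [c [Hin [Hr Hc]]]].
  destruct (dom_card _ _ _ H1 Hr) as [k [Hk Hk']].
  destruct (dom_card _ _ _ H2 Hc) as [k2 [Hk2 Hk2']].
  exists k, k2. split; auto. eapply zs_down; eauto.
Qed.

Lemma dom_sub (P Q : nat -> Prop) : (forall u, P u -> Q u) -> dom P Q.
Proof. intros H l Hn Hp. exists l. auto. Qed.

Lemma dom_inj (P Q : nat -> Prop) (f : nat -> nat) :
  (forall u, P u -> Q (f u)) -> (forall u v, P u -> P v -> f u = f v -> u = v) -> dom P Q.
Proof.
  intros H1 H2 l Hn Hp. exists (map f l). split; [|split].
  - apply NoDup_map_NoDup_ForallPairs; auto. intros a b Ha Hb. apply H2; auto.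
  - apply length_map.
  - intros u Hu. apply in_map_iff in Hu. destruct Hu as [v [<- Hv]]. auto.
Qed.

Lemma Titer_S Z t A x : Titer Z t A x -> Titer Z (S t) A x.
Proof. intros H. simpl. left. auto. Qed.

Lemma Titer_le Z t t' A x : (t <= t')%nat -> Titer Z t A x -> Titer Z t' A x.
Proof. intros H. induction H; auto. intros. apply Titer_S. auto. Qed.

Lemma Titer_0 Z t A x : A x -> Titer Z t A x.
Proof. intros H. apply (Titer_le Z 0). lia. exact H. Qed.

Lemma max_time (Q : nat -> nat -> Prop) (l : list nat) :
  (forall t t' u, (t <= t')%nat -> Q t u -> Q t' u) ->
  (forall u, In u l -> exists t, Q t u) -> exists T, forall u, In u l -> Q T u.
Proof.
  intros Hm. induction l as [|a l IH]; intros H.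
  - exists 0%nat. intros u [].
  - destruct (H a (or_introl eq_refl)) as [ta Ha].
    destruct IH as [T HT]. intros u Hu. apply H. right; auto.
    exists (Nat.max ta T). intros u [<-|Hu].
    + eapply Hm; [|eauto]. lia.
    + eapply Hm; [|eauto]. lia.
Qed.

Definition closure (Z : list point) (A : pset) : pset := fun x => exists t, Titer Z t A x.

Lemma not_step Z t A x : ~ Titer Z (S t) A x -> ~ Titer Z t A x /\ count_in_Z Z (Titer Z t A) x.
Proof.
  intros H. simpl in H. unfold Tstep in H. split.
  - intro; apply H; left; auto.
  - apply NNPP. intro Hc. apply H. right. split; [intro; apply H; left; auto | exact Hc].
Qed.

Lemma closure_closed Z A x : is_finite_zero_set Z -> ~ closure Z A x -> count_in_Z Z (closure Z A) x.
Proof.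
  intros HZ Hn.
  assert (Hc : forall t, count_in_Z Z (Titer Z t A) x).
  { intros t. apply (not_step Z t A x). intro; apply Hn. exists (S t). auto. }
  destruct (list_bound Z) as [Bd HB].
  assert (Hm : forall (f : nat -> point), (forall t t' u, (t<=t')%nat -> Titer Z t A (f u) -> Titer Z t' A (f u))).
  { intros f t t' u H1 H2. exact (Titer_le _ _ _ _ _ H1 H2). }
  assert (Hr : fin_le (fun u => closure Z A (u, snd x)) Bd).
  { intros l Hnd Hp.
    destruct (max_time (fun t u => Titer Z t A (u, snd x)) l (Hm (fun u => (u, snd x))) Hp) as [T HT].
    destruct (Hc T) as [r [c [Hin [Hr _]]]].
    assert (length l <= r)%nat by (eapply card_ge; eauto).
    destruct (HB _ Hin). simpl in *. lia. }
  assert (Hcl : fin_le (fun v => closure Z A (fst x, v)) Bd).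
  { intros l Hnd Hp.
    destruct (max_time (fun t v => Titer Z t A (fst x, v)) l (Hm (fun v => (fst x, v))) Hp) as [T HT].
    destruct (Hc T) as [r [c [Hin [_ Hcc]]]].
    assert (length l <= c)%nat by (eapply card_ge; eauto).
    destruct (HB _ Hin). simpl in *. lia. }
  destruct (fin_le_card _ _ Hr) as [kr [_ Hkr]].
  destruct (fin_le_card _ _ Hcl) as [kc [_ Hkc]].
  destruct Hkr as [lr [Hlr1 [Hlr2 Hlr3]]].
  destruct Hkc as [lc [Hlc1 [Hlc2 Hlc3]]].
  destruct (max_time (fun t u => Titer Z t A (u, snd x)) lr (Hm (fun u => (u, snd x)))) as [T1 HT1].
  { intros u Hu. apply Hlr3. auto. }
  destruct (max_time (fun t v => Titer Z t A (fst x, v)) lc (Hm (fun v => (fst x, v)))) as [T2 HT2].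
  { intros u Hu. apply Hlc3. auto. }
  set (T := Nat.max T1 T2).
  destruct (Hc T) as [r [c [Hin [Hrr Hcc]]]].
  assert (E1 : r = kr).
  { apply Nat.le_antisymm.
    - destruct Hrr as [l [Hl1 [Hl2 Hl3]]]. subst r. rewrite <- Hlr2.
      apply (card_ge (fun u => closure Z A (u, snd x)) (length lr) l).
      exists lr; split; [auto|split;[reflexivity|exact Hlr3]]. exact Hl1.
      intros u Hu. exists T. apply Hl3. auto.
    - subst kr. eapply card_ge; eauto. intros u Hu. eapply Titer_le; [|apply HT1; auto]. lia. }
  assert (E2 : c = kc).
  { apply Nat.le_antisymm.
    - destruct Hcc as [l [Hl1 [Hl2 Hl3]]]. subst c. rewrite <- Hlc2.
      apply (card_ge (fun v => closure Z A (fst x, v)) (length lc) l).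
      exists lc; split; [auto|split;[reflexivity|exact Hlc3]]. exact Hl1.
      intros u Hu. exists T. apply Hl3. auto.
    - subst kc. eapply card_ge; eauto. intros u Hu. eapply Titer_le; [|apply HT2; auto]. lia. }
  subst. exists (length lr), (length lc). split; auto. split.
  exists lr; auto. exists lc; auto.
Qed.

Lemma build_list (P : nat -> Prop) (L : nat) : forall n,
  (forall r, (r <= n)%nat -> exists u, (r*L <= u < (S r)*L)%nat /\ P u) ->
  exists l, NoDup l /\ length l = S n /\ forall u, In u l -> P u /\ (u < (S n) * L)%nat.
Proof.
  induction n; intros H.
  - destruct (H 0%nat (le_n _)) as [u [Hu Pu]]. exists [u]. split; [|split].
    + constructor; [intros []|constructor].
    + reflexivity.
    + intros v [<-|[]]. split; auto. lia.
  - destruct IHn as [l [Hn [Hl Hi]]]. intros r Hr. apply H. lia.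
    destruct (H (S n) (le_n _)) as [u [Hu Pu]].
    exists (u :: l). split; [|split].
    + constructor; auto. intro Hin. destruct (Hi u Hin). lia.
    + simpl. lia.
    + intros v [<-|Hv]. split; auto. lia. destruct (Hi v Hv). split; auto. nia.
Qed.

Lemma row_span Z L A : is_finite_zero_set Z ->
  (forall r c, In (r,c) Z -> exists u, (r*L <= u < (S r)*L)%nat /\ A (u,c)) ->
  spans Z A.
Proof.
  intros HZ HA.
  destruct (list_bound Z) as [Hb HB].
  assert (Hrow : forall c j u, (j < c)%nat -> Titer Z c A (u, j)).
  { induction c; intros j u Hj. lia.
    destruct (Nat.eq_dec j c) as [->|Hne].
    2:{ apply Titer_S. apply IHc. lia. }
    simpl. unfold Tstep. destruct (classic (Titer Z c A (u,c))) as [H|H]. left; auto.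
    right. split; auto. intros [n [m [Hin [Hr Hc]]]].
    assert (Hm : (c <= m)%nat).
    { assert (H1 := card_ge _ _ (seq 0 c) Hc (seq_NoDup _ _)). rewrite length_seq in H1.
      apply H1. intros v Hv. apply in_seq in Hv. simpl. apply IHc. lia. }
    assert (Hnc : In (n, c) Z) by (eapply zs_down; eauto).
    destruct (build_list (fun v => Titer Z c A (v, c)) L n) as [l [Hl1 [Hl2 Hl3]]].
    { intros r Hr'. destruct (HA r c) as [v [Hv Av]]. eapply zs_down; eauto.
      exists v. split; auto. apply Titer_0. auto. }
    assert (length l <= n)%nat.
    { eapply card_ge; eauto. intros v Hv. apply Hl3. auto. }
    lia. }
  intros x. exists (S Hb). destruct x as [u v].
  destruct (Nat.lt_ge_cases v Hb) as [Hv|Hv].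
  - apply Titer_S. apply Hrow. auto.
  - simpl. unfold Tstep. destruct (classic (Titer Z Hb A (u,v))) as [H|H]. left; auto.
    right. split; auto. intros [n [m [Hin [Hr Hc]]]].
    assert (Hm : (Hb <= m)%nat).
    { assert (H1 := card_ge _ _ (seq 0 Hb) Hc (seq_NoDup _ _)). rewrite length_seq in H1.
      apply H1. intros w Hw. apply in_seq in Hw. simpl. apply Hrow. lia. }
    destruct (HB _ Hin). simpl in *. lia.
Qed.

Definition tr (x : point) : point := (snd x, fst x).

Lemma tr_tr x : tr (tr x) = x.
Proof. destruct x; reflexivity. Qed.

Lemma in_map_tr Z r c : In (r,c) (map tr Z) <-> In (c,r) Z.
Proof.
  split; intro H.
  - apply in_map_iff in H. destruct H as [[a b] [E H]]. unfold tr in E; simpl in E.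
    inversion E; subst; auto.
  - apply in_map_iff. exists (c,r). auto.
Qed.

Lemma zs_tr Z : is_finite_zero_set Z -> is_finite_zero_set (map tr Z).
Proof.
  intros [Hn H]. split.
  - apply NoDup_map_NoDup_ForallPairs; auto. intros a b _ _ E.
    rewrite <- (tr_tr a), <- (tr_tr b), E. auto.
  - intros [r c] Hz. apply (proj1 (in_map_tr Z r c)) in Hz. destruct (H _ Hz) as [a [b [[H1 H2] H3]]].
    exists b, a. split. split; auto. intros [w1 w2] [W1 W2]. apply (proj2 (in_map_tr Z w1 w2)). apply H3.
    split; auto.
Qed.

Lemma count_tr Z G G' x : (forall y, G' y <-> G (tr y)) ->
  (count_in_Z (map tr Z) G' x <-> count_in_Z Z G (tr x)).
Proof.
  intros HG. split.
  - intros [r [c [Hin [Hr Hc]]]]. exists c, r. split. apply (proj1 (in_map_tr Z r c)); auto. split.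
    + eapply card_iff; [|exact Hc]. intros v. rewrite HG. reflexivity.
    + eapply card_iff; [|exact Hr]. intros v. rewrite HG. reflexivity.
  - intros [r [c [Hin [Hr Hc]]]]. exists c, r. split. apply (proj2 (in_map_tr Z c r)); auto. split.
    + eapply card_iff; [|exact Hc]. intros v. rewrite HG. reflexivity.
    + eapply card_iff; [|exact Hr]. intros v. rewrite HG. reflexivity.
Qed.

Lemma Titer_tr Z A : forall t x, Titer (map tr Z) t (fun y => A (tr y)) x <-> Titer Z t A (tr x).
Proof.
  induction t; intros x. simpl. reflexivity.
  simpl. unfold Tstep. rewrite IHt. rewrite (count_tr Z (Titer Z t A)). reflexivity.
  intros y. apply IHt.
Qed.

Lemma col_span Z L A : is_finite_zero_set Z ->
  (forall r c, In (r,c) Z -> exists v, (c*L <= v < (S c)*L)%nat /\ A (r,v)) ->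
  spans Z A.
Proof.
  intros HZ HA.
  assert (H := row_span (map tr Z) L (fun y => A (tr y)) (zs_tr Z HZ)).
  intros x. destruct (H) with (x := tr x) as [t Ht].
  - intros r c Hin. apply (proj1 (in_map_tr Z r c)) in Hin. destruct (HA c r Hin) as [v [Hv Av]].
    exists v. split; auto.
  - exists t. apply (proj1 (Titer_tr Z A t (tr x))) in Ht. rewrite tr_tr in Ht. auto.
Qed.

Definition pt_eq_dec (x y : point) : {x = y} + {x <> y}.
Proof. decide equality; apply Nat.eq_dec. Defined.

Fixpoint idx (x : point) (l : list point) : nat :=
  match l with
  | [] => 0%nat
  | y :: l' => if pt_eq_dec x y then 0%nat else S (idx x l')
  end.

Lemma idx_spec x l : In x l -> (idx x l < length l)%nat /\ nth (idx x l) l (0%nat,0%nat) = x.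
Proof.
  induction l as [|y l IH]; intros H. destruct H.
  simpl. destruct (pt_eq_dec x y) as [->|Hne]. split; auto; lia.
  destruct H as [->|H]. congruence. destruct (IH H). split; auto. lia.
Qed.

Lemma idx_nth x l i : NoDup l -> (i < length l)%nat -> nth i l (0%nat,0%nat) = x -> idx x l = i.
Proof.
  revert i. induction l as [|y l IH]; intros i Hn Hi He. simpl in Hi; lia.
  inversion Hn as [|a b Hnot Hnd E]. simpl. destruct i as [|i].
  - simpl in He. rewrite <- He. destruct (pt_eq_dec y y); congruence.
  - simpl in He. destruct (pt_eq_dec x y) as [->|Hne].
    + exfalso. apply Hnot. rewrite <- He. apply nth_In. simpl in Hi; lia.
    + f_equal. apply IH; auto. simpl in Hi; lia.
Qed.

Definition swapn (w w' a : nat) : nat :=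
  if Nat.eq_dec a w then w' else if Nat.eq_dec a w' then w else a.

Lemma Titer_swap1 Z A w w' : (forall x, A (swapn w w' (fst x), snd x) <-> A x) ->
  forall t x, Titer Z t A (swapn w w' (fst x), snd x) <-> Titer Z t A x.
Proof.
  intros HA. induction t; intros x. simpl. apply HA.
  simpl. unfold Tstep. rewrite IHt.
  assert (E : count_in_Z Z (Titer Z t A) (swapn w w' (fst x), snd x) <-> count_in_Z Z (Titer Z t A) x).
  { unfold count_in_Z. simpl. split; intros [r [c [H1 [H2 H3]]]]; exists r, c; split; auto; split; auto;
    (eapply card_iff; [|exact H3]); intros v; simpl.
    - rewrite <- (IHt (fst x, v)). reflexivity.
    - rewrite <- (IHt (fst x, v)). reflexivity. }
  rewrite E. reflexivity.
Qed.

Lemma Titer_swap2 Z A w w' : (forall x, A (fst x, swapn w w' (snd x)) <-> A x) ->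
  forall t x, Titer Z t A (fst x, swapn w w' (snd x)) <-> Titer Z t A x.
Proof.
  intros HA. induction t; intros x. simpl. apply HA.
  simpl. unfold Tstep. rewrite IHt.
  assert (E : count_in_Z Z (Titer Z t A) (fst x, swapn w w' (snd x)) <-> count_in_Z Z (Titer Z t A) x).
  { unfold count_in_Z. simpl. split; intros [r [c [H1 [H2 H3]]]]; exists r, c; split; auto; split; auto;
    (eapply card_iff; [|exact H2]); intros v; simpl.
    - rewrite <- (IHt (v, snd x)). reflexivity.
    - rewrite <- (IHt (v, snd x)). reflexivity. }
  rewrite E. reflexivity.
Qed.

Lemma gen_col Z S B t w w' y : (forall s, In s S -> (fst s < B)%nat /\ (snd s < B)%nat) ->
  (B <= w)%nat -> (B <= w')%nat ->
  Titer Z t (set_of_list S) (w, y) -> Titer Z t (set_of_list S) (w', y).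
Proof.
  intros HS Hw Hw' H.
  assert (Hinv : forall x, set_of_list S (swapn w w' (fst x), snd x) <-> set_of_list S x).
  { intros [a b]. unfold set_of_list, swapn; simpl.
    destruct (Nat.eq_dec a w); [|destruct (Nat.eq_dec a w')].
    - split; intro Hi; destruct (HS _ Hi); simpl in *; lia.
    - split; intro Hi; destruct (HS _ Hi); simpl in *; lia.
    - reflexivity. }
  apply (proj2 (Titer_swap1 Z _ w w' Hinv t (w, y))) in H.
  unfold swapn in H; simpl in H. destruct (Nat.eq_dec w w); [|congruence]. exact H.
Qed.

Lemma gen_row Z S B t w w' y : (forall s, In s S -> (fst s < B)%nat /\ (snd s < B)%nat) ->
  (B <= w)%nat -> (B <= w')%nat ->
  Titer Z t (set_of_list S) (y, w) -> Titer Z t (set_of_list S) (y, w').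
Proof.
  intros HS Hw Hw' H.
  assert (Hinv : forall x, set_of_list S (fst x, swapn w w' (snd x)) <-> set_of_list S x).
  { intros [a b]. unfold set_of_list, swapn; simpl.
    destruct (Nat.eq_dec b w); [|destruct (Nat.eq_dec b w')].
    - split; intro Hi; destruct (HS _ Hi); simpl in *; lia.
    - split; intro Hi; destruct (HS _ Hi); simpl in *; lia.
    - reflexivity. }
  apply (proj2 (Titer_swap2 Z _ w w' Hinv t (y, w))) in H.
  unfold swapn in H; simpl in H. destruct (Nat.eq_dec w w); [|congruence]. exact H.
Qed.

Lemma U_span Z S B (cf rf : nat -> nat) (A : pset) :
  is_finite_zero_set Z -> spans Z (set_of_list S) ->
  (forall s, In s S -> (fst s < B)%nat /\ (snd s < B)%nat) ->
  (forall i, (i < length S)%nat -> (B <= cf i)%nat /\ (B <= rf i)%nat) ->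
  (forall i j, (i < length S)%nat -> (j < length S)%nat -> cf i = cf j -> i = j) ->
  (forall i j, (i < length S)%nat -> (j < length S)%nat -> rf i = rf j -> i = j) ->
  (forall i, (i < length S)%nat ->
     A (cf i, snd (nth i S (0%nat,0%nat))) /\ A (fst (nth i S (0%nat,0%nat)), rf i)) ->
  spans Z A.
Proof.
  intros HZ Hsp HS Hb Hcf Hrf HA.
  set (H := closure Z A).
  set (G := fun t => Titer Z t (set_of_list S)).
  assert (HAH : forall x, A x -> H x) by (intros x Hx; exists 0%nat; exact Hx).
  assert (Hcl : forall x, ~ H x -> count_in_Z Z H x) by (intros; apply closure_closed; auto).
  assert (Key1 : forall y, (forall w, (B <= w)%nat -> H (w,y)) -> forall s, In s S -> snd s = y -> H s).
  { intros y Hy s Hs Hsy. apply NNPP. intro Hn. destruct (Hcl s Hn) as [r [c [_ [Hr _]]]].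
    apply (card_infinite (fun u => H (u, snd s)) B r); [|exact Hr]. intros w Hw. rewrite Hsy. apply Hy; auto. }
  assert (Key2 : forall x0, (forall w, (B <= w)%nat -> H (x0,w)) -> forall s, In s S -> fst s = x0 -> H s).
  { intros x0 Hy s Hs Hsy. apply NNPP. intro Hn. destruct (Hcl s Hn) as [r [c [_ [_ Hc]]]].
    apply (card_infinite (fun u => H (fst s, u)) B c); [|exact Hc]. intros w Hw. rewrite Hsy. apply Hy; auto. }
  assert (Inv : forall t x, G t x -> ~ In x S -> H x).
  { induction t; intros x Hx Hnx.
    - contradiction.
    - destruct Hx as [Hx|[Hx1 Hx2]]. apply IHt; auto.
      apply NNPP. intro Hn. apply Hx2. apply (dom_count Z _ H x HZ); [| |apply Hcl; auto].
      +
        set (y := snd x).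
        destruct (classic (forall s, In s S -> snd s = y -> H s)) as [Hall|Hnot].
        * apply dom_sub. intros u Hu. destruct (In_dec pt_eq_dec (u,y) S) as [Hi|Hi].
          apply Hall; auto. apply IHt; auto.
        * assert (NP : forall i, (i < length S)%nat -> snd (nth i S (0%nat,0%nat)) = y -> ~ G t (cf i, y)).
          { intros i Hi Hy Hg. apply Hnot. apply Key1. intros w Hw. apply IHt.
            - eapply gen_col; [exact HS| | |exact Hg]. apply Hb; auto. auto.
            - intro Hin. destruct (HS _ Hin). simpl in *. lia. }
          apply (dom_inj _ _ (fun u => if In_dec pt_eq_dec (u,y) S then cf (idx (u,y) S) else u)).
          -- intros u Hu. destruct (In_dec pt_eq_dec (u,y) S) as [Hi|Hi].
             ++ destruct (idx_spec _ _ Hi) as [Hi1 Hi2]. apply HAH.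
                destruct (HA _ Hi1) as [A1 _]. rewrite Hi2 in A1. exact A1.
             ++ apply IHt; auto.
          -- intros u v Hu Hv E.
             destruct (In_dec pt_eq_dec (u,y) S) as [Hi|Hi];
             destruct (In_dec pt_eq_dec (v,y) S) as [Hj|Hj].
             ++ destruct (idx_spec _ _ Hi) as [Hi1 Hi2]. destruct (idx_spec _ _ Hj) as [Hj1 Hj2].
                assert (E2 := Hcf _ _ Hi1 Hj1 E). rewrite E2 in Hi2. rewrite Hi2 in Hj2.
                congruence.
             ++ exfalso. destruct (idx_spec _ _ Hi) as [Hi1 Hi2]. apply (NP _ Hi1).
                rewrite Hi2; reflexivity. rewrite E. exact Hv.
             ++ exfalso. destruct (idx_spec _ _ Hj) as [Hj1 Hj2]. apply (NP _ Hj1).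
                rewrite Hj2; reflexivity. rewrite <- E. exact Hu.
             ++ exact E.
      +
        set (y := fst x).
        destruct (classic (forall s, In s S -> fst s = y -> H s)) as [Hall|Hnot].
        * apply dom_sub. intros u Hu. destruct (In_dec pt_eq_dec (y,u) S) as [Hi|Hi].
          apply Hall; auto. apply IHt; auto.
        * assert (NP : forall i, (i < length S)%nat -> fst (nth i S (0%nat,0%nat)) = y -> ~ G t (y, rf i)).
          { intros i Hi Hy Hg. apply Hnot. apply Key2. intros w Hw. apply IHt.
            - eapply gen_row; [exact HS| | |exact Hg]. apply Hb; auto. auto.
            - intro Hin. destruct (HS _ Hin). simpl in *. lia. }
          apply (dom_inj _ _ (fun u => if In_dec pt_eq_dec (y,u) S then rf (idx (y,u) S) else u)).
          -- intros u Hu. destruct (In_dec pt_eq_dec (y,u) S) as [Hi|Hi].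
             ++ destruct (idx_spec _ _ Hi) as [Hi1 Hi2]. apply HAH.
                destruct (HA _ Hi1) as [_ A1]. rewrite Hi2 in A1. exact A1.
             ++ apply IHt; auto.
          -- intros u v Hu Hv E.
             destruct (In_dec pt_eq_dec (y,u) S) as [Hi|Hi];
             destruct (In_dec pt_eq_dec (y,v) S) as [Hj|Hj].
             ++ destruct (idx_spec _ _ Hi) as [Hi1 Hi2]. destruct (idx_spec _ _ Hj) as [Hj1 Hj2].
                assert (E2 := Hrf _ _ Hi1 Hj1 E). rewrite E2 in Hi2. rewrite Hi2 in Hj2.
                congruence.
             ++ exfalso. destruct (idx_spec _ _ Hi) as [Hi1 Hi2]. apply (NP _ Hi1).
                rewrite Hi2; reflexivity. rewrite E. exact Hv.
             ++ exfalso. destruct (idx_spec _ _ Hj) as [Hj1 Hj2]. apply (NP _ Hj1).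
                rewrite Hj2; reflexivity. rewrite <- E. exact Hu.
             ++ exact E. }
  assert (Hout : forall x, ~ In x S -> H x).
  { intros x Hx. destruct (Hsp x) as [t Ht]. apply (Inv t); auto. }
  intros x. change (H x).
  destruct (In_dec pt_eq_dec x S) as [Hi|Hi]; [|apply Hout; auto].
  apply (Key1 (snd x)); auto. intros w Hw. apply Hout. intro Hin. destruct (HS _ Hin). simpl in *. lia.
Qed.

Definition Exp (p : R) (n : nat) (f : list bool -> R) : R :=
  fold_right Rplus 0 (map (fun m => mask_weight p m * f m) (masks n)).

Lemma sum_app (l1 l2 : list R) : fold_right Rplus 0 (l1 ++ l2) = fold_right Rplus 0 l1 + fold_right Rplus 0 l2.
Proof. induction l1; simpl. ring. rewrite IHl1. ring. Qed.

Lemma sum_scale {A} (c : R) (g : A -> R) (l : list A) :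
  fold_right Rplus 0 (map (fun x => c * g x) l) = c * fold_right Rplus 0 (map g l).
Proof. induction l; simpl. ring. rewrite IHl. ring. Qed.

Lemma sum_ext {A} (g h : A -> R) (l : list A) : (forall x, g x = h x) ->
  fold_right Rplus 0 (map g l) = fold_right Rplus 0 (map h l).
Proof. intros H. induction l; simpl; auto. rewrite H, IHl. auto. Qed.

Lemma sum_le {A} (g h : A -> R) (l : list A) : (forall x, g x <= h x) ->
  fold_right Rplus 0 (map g l) <= fold_right Rplus 0 (map h l).
Proof. intros H. induction l; simpl. lra. specialize (H a). lra. Qed.

Lemma Exp_S p n f : Exp p (S n) f =
  p * Exp p n (fun m => f (true :: m)) + (1 - p) * Exp p n (fun m => f (false :: m)).
Proof.
  unfold Exp. simpl. rewrite map_app, sum_app, !map_map.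
  rewrite <- !sum_scale. f_equal; apply sum_ext; intros m; simpl; ring.
Qed.

Lemma Exp_0 p f : Exp p 0 f = f [].
Proof. unfold Exp. simpl. ring. Qed.

Lemma Exp_ext p n f g : (forall m, f m = g m) -> Exp p n f = Exp p n g.
Proof. intros H. unfold Exp. apply sum_ext. intros; rewrite H; auto. Qed.

Lemma weight_nonneg p m : 0 <= p <= 1 -> 0 <= mask_weight p m.
Proof. intros Hp. induction m as [|b m IH]; simpl. lra. destruct b; apply Rmult_le_pos; lra. Qed.

Lemma Exp_mono p n f g : 0 <= p <= 1 -> (forall m, f m <= g m) -> Exp p n f <= Exp p n g.
Proof.
  intros Hp H. unfold Exp. apply sum_le. intros m. apply Rmult_le_compat_l.
  apply weight_nonneg; auto. auto.
Qed.

Lemma indicator_iff P Q : (P <-> Q) -> indicator P = indicator Q.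
Proof.
  intros H. unfold indicator. destruct (excluded_middle_informative P), (excluded_middle_informative Q); tauto.
Qed.

Lemma indicator_le P Q : (P -> Q) -> indicator P <= indicator Q.
Proof.
  intros H. unfold indicator. destruct (excluded_middle_informative P), (excluded_middle_informative Q); try lra; tauto.
Qed.

Definition Ev (K : nat) (blk : nat -> option nat) (D : nat -> bool) (m : list bool) : Prop :=
  forall k, (k < K)%nat -> D k = false -> exists i, blk i = Some k /\ nth_error m i = Some true.

Definition Prl (l : list nat) (D : nat -> bool) (g : nat -> R) : R :=
  fold_right Rmult 1 (map (fun k => if D k then 1 else g k) l).

Definition qf (p : R) (s : nat) : R := 1 - (1 - p) ^ s.

Fixpoint bsize (n : nat) (blk : nat -> option nat) (k : nat) : nat :=
  match n with
  | O => O
  | S n' => ((match blk O with Some j => if Nat.eqb j k then 1 else 0 | None => 0 end)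
             + bsize n' (fun i => blk (S i)) k)%nat
  end.

Definition upd (D : nat -> bool) (o : option nat) : nat -> bool :=
  match o with Some j => fun k => orb (D k) (Nat.eqb k j) | None => D end.

Lemma Ev_cons K blk D b m :
  Ev K blk D (b :: m) <-> Ev K (fun i => blk (S i)) (if b then upd D (blk O) else D) m.
Proof.
  split.
  - intros H k Hk Hd.
    assert (HD : D k = false).
    { destruct b; auto. destruct (blk O); simpl in Hd; auto. apply Bool.orb_false_iff in Hd. tauto. }
    destruct (H k Hk HD) as [i [Hi Hm]]. destruct i as [|i].
    + simpl in Hm. inversion Hm; subst. rewrite Hi in Hd. simpl in Hd.
      rewrite Nat.eqb_refl, Bool.orb_true_r in Hd. discriminate.
    + exists i. auto.
  - intros H k Hk Hd.
    destruct ((if b then upd D (blk O) else D) k) eqn:E.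
    + destruct b; [|congruence].
      destruct (blk O) as [j|] eqn:Hj; simpl in E.
      * rewrite Hd in E. simpl in E. apply Nat.eqb_eq in E. subst j.
        exists O. split; auto.
      * congruence.
    + destruct (H k Hk E) as [i [Hi Hm]]. exists (S i). split; auto.
Qed.

Lemma Prl_all1 l D g : (forall k, In k l -> D k = true) -> Prl l D g = 1.
Proof. unfold Prl.
  induction l; intros H; simpl. auto. rewrite H by (left; auto). rewrite IHl. ring.
  intros; apply H; right; auto.
Qed.

Lemma Prl_zero l D g k : In k l -> D k = false -> g k = 0 -> Prl l D g = 0.
Proof. unfold Prl.
  induction l; intros Hi Hd Hg; simpl. destruct Hi.
  destruct Hi as [->|Hi]. rewrite Hd, Hg. ring. rewrite IHl; auto. ring.
Qed.

Lemma Prl_ext l D1 D2 g1 g2 : (forall k, In k l -> D1 k = D2 k) ->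
  (forall k, In k l -> D1 k = false -> g1 k = g2 k) -> Prl l D1 g1 = Prl l D2 g2.
Proof. unfold Prl.
  induction l; intros H1 H2; simpl. auto.
  rewrite IHl; [| intros; apply H1; right; auto | intros; apply H2; auto; right; auto].
  rewrite <- (H1 a) by (left; auto). destruct (D1 a) eqn:E. auto. rewrite H2; auto. left; auto.
Qed.

Lemma Prl_split l D g k0 : NoDup l -> In k0 l -> D k0 = false ->
  Prl l D g = g k0 * Prl l (upd D (Some k0)) g.
Proof. unfold Prl.
  induction l as [|a l IH]; intros Hn Hi Hd. destruct Hi.
  inversion Hn as [|a' l' Hnot Hnd E]. subst a' l'. simpl.
  destruct Hi as [->|Hi].
  - rewrite Hd, Nat.eqb_refl, Bool.orb_true_r. simpl.
    assert (E2 : Prl l D g = Prl l (fun k => (D k || (k =? k0)%nat)%bool) g).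
    { apply Prl_ext; auto. intros k Hk. destruct (Nat.eqb_spec k k0). subst; contradiction. rewrite Bool.orb_false_r. auto. }
    unfold Prl in E2. rewrite E2. ring.
  - rewrite (IH Hnd Hi Hd). destruct (Nat.eqb_spec a k0). subst; contradiction.
    rewrite Bool.orb_false_r. unfold upd. destruct (D a); ring.
Qed.

Lemma block_exp p K : forall n blk D,
  Exp p n (fun m => indicator (Ev K blk D m)) = Prl (seq 0 K) D (fun k => qf p (bsize n blk k)).
Proof.
  induction n; intros blk D.
  - rewrite Exp_0. simpl.
    destruct (classic (forall k, (k < K)%nat -> D k = true)) as [Hall|Hn].
    + rewrite Prl_all1. unfold indicator. destruct (excluded_middle_informative _) as [_|Hc]; auto.
      exfalso; apply Hc. intros k Hk Hd. rewrite Hall in Hd; auto. discriminate.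
      intros k Hk. apply in_seq in Hk. apply Hall. lia.
    + apply not_all_ex_not in Hn. destruct Hn as [k Hk]. apply imply_to_and in Hk.
      destruct Hk as [Hk Hd]. apply Bool.not_true_is_false in Hd.
      rewrite (Prl_zero _ _ _ k). unfold indicator. destruct (excluded_middle_informative _) as [He|]; auto.
      destruct (He k Hk Hd) as [i [_ Hi]]. destruct i; discriminate.
      apply in_seq; lia. auto. unfold qf. simpl. ring.
  - rewrite Exp_S.
    rewrite (Exp_ext p n _ (fun m => indicator (Ev K (fun i => blk (S i)) (upd D (blk O)) m)))
      by (intros m; apply indicator_iff; apply Ev_cons).
    rewrite (Exp_ext p n (fun m => indicator (Ev K blk D (false :: m)))
                         (fun m => indicator (Ev K (fun i => blk (S i)) D m)))
      by (intros m; apply indicator_iff; apply Ev_cons).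
    rewrite !IHn. simpl.
    destruct (blk O) as [j|] eqn:Hj.
    + destruct (classic ((j < K)%nat /\ D j = false)) as [[HjK HjD]|Hno].
      * assert (Hin : In j (seq 0 K)) by (apply in_seq; lia).
        rewrite (Prl_split _ D _ j (seq_NoDup _ _) Hin HjD).
set (gn := fun k => qf p (bsize n (fun i => blk (S i)) k)).
        set (g1 := fun k => qf p ((if (j =? k)%nat then 1%nat else 0%nat) + bsize n (fun i => blk (S i)) k)%nat).
        rewrite (Prl_split (seq 0 K) D g1 j (seq_NoDup _ _) Hin HjD).
        rewrite (Prl_ext _ (upd D (Some j)) (upd D (Some j)) g1 gn).
        -- unfold g1, gn. rewrite Nat.eqb_refl. unfold qf. simpl. ring.
        -- auto.
        -- intros k _ Hk. simpl in Hk. apply Bool.orb_false_iff in Hk. destruct Hk as [_ Hk].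
           unfold g1, gn. rewrite Nat.eqb_sym, Hk. auto.
      * rewrite (Prl_ext _ (upd D (Some j)) D _ (fun k => qf p (bsize n (fun i => blk (S i)) k))).
        rewrite (Prl_ext _ D D (fun k => qf p ((if (j =? k)%nat then 1%nat else 0%nat) + bsize n (fun i => blk (S i)) k)%nat)
                   (fun k => qf p (bsize n (fun i => blk (S i)) k))). ring.
        -- auto.
        -- intros k Hk Hd. destruct (Nat.eqb_spec j k). subst. exfalso. apply Hno. split; auto.
           apply in_seq in Hk. lia. auto.
        -- intros k Hk. simpl. destruct (Nat.eqb_spec k j). subst. destruct (D j) eqn:E; auto.
           exfalso; apply Hno. apply in_seq in Hk. split; auto. lia.
           rewrite Bool.orb_false_r. auto.
        -- auto.
    + simpl. ring_simplify. auto.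
Qed.

Lemma nth_prod s N M u v : (u < N)%nat -> (v < M)%nat ->
  nth_error (list_prod (seq s N) (seq 0 M)) (u * M + v) = Some ((s + u)%nat, v).
Proof.
  revert s u. induction N; intros s u Hu Hv. lia.
  simpl. destruct u as [|u].
  - rewrite nth_error_app1 by (rewrite length_map, length_seq; lia).
    rewrite nth_error_map, nth_error_seq.
    match goal with |- context [if ?c then _ else _] => destruct c eqn:E end.
    + simpl. rewrite Nat.add_0_r. reflexivity.
    + apply Nat.ltb_ge in E. lia.
  - rewrite nth_error_app2 by (rewrite length_map, length_seq; nia).
    rewrite length_map, length_seq.
    replace (S u * M + v - M)%nat with (u * M + v)%nat by nia.
    rewrite IHN by lia. f_equal. f_equal. lia.
Qed.

Lemma nth_rect N M u v : (u < N)%nat -> (v < M)%nat ->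
  nth_error (rect_list N M) (u * M + v) = Some (u, v).
Proof. intros. unfold rect_list. rewrite nth_prod; auto. Qed.

Lemma bsize_ext n blk1 blk2 k : (forall i, blk1 i = blk2 i) -> bsize n blk1 k = bsize n blk2 k.
Proof.
  revert blk1 blk2. induction n; intros blk1 blk2 H; simpl. auto.
  rewrite H. f_equal. apply IHn. intros; apply H.
Qed.

Definition bm (o : option nat) (k : nat) : bool := match o with Some j => Nat.eqb j k | None => false end.

Lemma bsize_filter n blk k : forall s,
  bsize n (fun i => blk (s + i)%nat) k = length (filter (fun i => bm (blk i) k) (seq s n)).
Proof.
  induction n; intros s. auto.
  simpl. rewrite Nat.add_0_r.
  rewrite (bsize_ext n (fun i => blk (s + S i)%nat) (fun i => blk (S s + i)%nat)) by (intros; f_equal; lia).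
  rewrite IHn. unfold bm. destruct (blk s) as [j|]; simpl; auto.
  destruct (Nat.eqb j k); simpl; auto.
Qed.

Lemma bsize_lower n blk k li : NoDup li -> (forall i, In i li -> (i < n)%nat /\ blk i = Some k) ->
  (length li <= bsize n blk k)%nat.
Proof.
  intros Hn H. rewrite (bsize_ext n blk (fun i => blk (0 + i)%nat)) by auto.
  rewrite bsize_filter. apply NoDup_incl_length; auto. intros i Hi.
  destruct (H i Hi) as [H1 H2]. apply filter_In. split. apply in_seq. lia.
  rewrite H2. simpl. apply Nat.eqb_refl.
Qed.

Lemma pow_le1' x n : 0 <= x <= 1 -> x ^ n <= 1.
Proof. intros H. induction n; simpl. lra. assert (0 <= x^n) by (apply pow_le; lra). nra. Qed.

Lemma qf_mono p L s : 0 <= p <= 1 -> (L <= s)%nat -> qf p L <= qf p s.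
Proof.
  intros Hp Hs. unfold qf. replace s with (L + (s - L))%nat by lia. rewrite pow_add.
  assert (0 <= (1-p)^L) by (apply pow_le; lra).
  assert ((1-p)^(s-L) <= 1) by (apply pow_le1'; lra).
  assert (0 <= (1-p)^(s-L)) by (apply pow_le; lra). nra.
Qed.

Lemma qf_nonneg p L : 0 <= p <= 1 -> 0 <= qf p L.
Proof. intros Hp. unfold qf. assert ((1-p)^L <= 1) by (apply pow_le1'; lra). lra. Qed.

Lemma Prl_lower l g c : 0 <= c -> (forall k, In k l -> c <= g k) -> c ^ (length l) <= Prl l (fun _ => false) g.
Proof.
  unfold Prl. induction l; intros Hc H; simpl. lra.
  apply Rmult_le_compat; auto. apply pow_le; auto. apply H; left; auto.
  apply IHl; auto. intros; apply H; right; auto.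
Qed.

Lemma Pspan_lower Z N M p (bf : point -> option nat) K L : 0 <= p <= 1 ->
  (forall k, (k < K)%nat -> exists l, NoDup l /\ length l = L /\
      forall x, In x l -> (fst x < N)%nat /\ (snd x < M)%nat /\ bf x = Some k) ->
  (forall A : pset, (forall k, (k < K)%nat -> exists x, bf x = Some k /\ A x) -> spans Z A) ->
  (qf p L) ^ K <= Pspan Z N M p.
Proof.
  intros Hp Hbl Hsp.
  set (pts := rect_list N M).
  set (blk := fun i => match nth_error pts i with Some x => bf x | None => None end).
  change (Pspan Z N M p) with (Exp p (length pts) (fun m => indicator (spans Z (mask_set pts m)))).
  apply Rle_trans with (Exp p (length pts) (fun m => indicator (Ev K blk (fun _ => false) m))).
  2:{ apply Exp_mono; auto. intros m. apply indicator_le. intros He. apply Hsp.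
      intros k Hk. destruct (He k Hk eq_refl) as [i [Hi Hm]]. unfold blk in Hi.
      destruct (nth_error pts i) as [x|] eqn:Ex; [|discriminate].
      exists x. split; auto. exists i. auto. }
  rewrite block_exp.
  replace K with (length (seq 0 K)) at 1 by apply length_seq.
  apply Prl_lower. apply qf_nonneg; auto.
  intros k Hk. apply in_seq in Hk. apply qf_mono; auto.
  destruct (Hbl k) as [l [Hl1 [Hl2 Hl3]]]. lia.
  rewrite <- Hl2.
  assert (Hidx : forall x, In x l -> nth_error pts (fst x * M + snd x)%nat = Some x).
  { intros [u v] Hx. destruct (Hl3 _ Hx) as [H1 [H2 _]]. apply nth_rect; auto. }
  rewrite <- (length_map (fun x => (fst x * M + snd x)%nat)).
  apply bsize_lower.
  - apply NoDup_map_NoDup_ForallPairs; auto. intros a b Ha Hb E.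
    assert (E1 := Hidx a Ha). rewrite E, Hidx in E1 by auto. congruence.
  - intros i Hi. apply in_map_iff in Hi. destruct Hi as [x [<- Hx]].
    destruct (Hl3 _ Hx) as [H1 [H2 H3]]. split.
    + unfold pts. assert (EE : length (rect_list N M) = (N*M)%nat). { unfold rect_list. etransitivity. apply length_prod. rewrite !length_seq. reflexivity. } rewrite EE. nia.
    + unfold blk. rewrite Hidx; auto.
Qed.

Lemma ln_le' x y : 0 < x -> x <= y -> ln x <= ln y.
Proof. intros Hx Hy. destruct (Rle_lt_or_eq_dec _ _ Hy) as [H|H]. left; apply ln_increasing; auto. subst; lra. Qed.

Lemma bernoulli p L : 0 <= p <= 1 -> (1 - p) ^ L * (1 + INR L * p) <= 1.
Proof.
  intros Hp. induction L. simpl. lra.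
  rewrite S_INR. simpl.
  assert (0 <= (1-p)^L) by (apply pow_le; lra).
  assert (0 <= INR L) by apply pos_INR.
  assert ((1 - p) * (1 + (INR L + 1) * p) <= 1 + INR L * p) by nra.
  apply Rle_trans with ((1-p)^L * (1 + INR L * p)); auto.
  replace ((1 - p) * (1 - p) ^ L * (1 + (INR L + 1) * p)) with ((1-p)^L * ((1 - p) * (1 + (INR L + 1) * p))) by ring.
  apply Rmult_le_compat_l; auto.
Qed.

Lemma qf_lower p L : 0 <= p <= 1 -> INR L * p / (1 + INR L * p) <= qf p L.
Proof.
  intros Hp. unfold qf. assert (0 <= INR L) by apply pos_INR.
  assert (Hx : 0 <= INR L * p) by nra.
  assert (Hb := bernoulli p L Hp).
  apply Rmult_le_reg_r with (1 + INR L * p). lra.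
  unfold Rdiv. rewrite Rmult_assoc, Rinv_l by lra. nra.
Qed.

Lemma analytic (F : R -> nat) (Pf : R -> R) (a I c : R) (K : nat) :
  0 < c -> a <= 1 ->
  to_infty0 (fun p => INR (F p)) ->
  lim0 (fun p => ln (INR (F p)) / (- ln p)) a ->
  lim0 (fun p => ln (Pf p) / ln p) I ->
  (exists d, 0 < d /\ forall p, 0 < p < d -> exists L : nat, c * INR (F p) <= INR L /\ (qf p L) ^ K <= Pf p) ->
  I <= INR K * (1 - a).
Proof.
  intros Hc Ha HF HlF HlP [d4 [Hd4 H4]].
  apply Rnot_lt_le. intro Hlt.
  assert (HK : 0 <= INR K) by apply pos_INR.
  set (e := (I - INR K * (1 - a)) / (2 * INR K + 2)).
  assert (He : 0 < e) by (unfold e; apply Rdiv_lt_0_compat; lra).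
  assert (He2 : (2 * INR K + 2) * e = I - INR K * (1 - a)) by (unfold e; field; lra).
  destruct (HlP e He) as [d1 [Hd1 H1]].
  destruct (HlF e He) as [d2 [Hd2 H2]].
  destruct (HF 1) as [d3 [Hd3 H3]].
  assert (Hln2 := ln_lt_2).
  set (Cst := ln 2 + Rabs (ln c) + 1).
  assert (HC : 0 < Cst) by (unfold Cst; assert (0 <= Rabs (ln c)) by apply Rabs_pos; lra).
  set (d5 := exp (- (Cst / e))).
  assert (Hd5 : 0 < d5) by apply exp_pos.
  set (p := Rmin (Rmin (Rmin d1 d2) (Rmin d3 d4)) (Rmin (1/2) d5) / 2).
  assert (Hmin : 0 < Rmin (Rmin (Rmin d1 d2) (Rmin d3 d4)) (Rmin (1/2) d5)).
  { repeat apply Rmin_pos; lra. }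
  assert (Hp0 : 0 < p) by (unfold p; lra).
  assert (Hple : p < Rmin (Rmin (Rmin d1 d2) (Rmin d3 d4)) (Rmin (1/2) d5)) by (unfold p; lra).


  assert (Hpd1 : p < d1).
  { apply Rlt_le_trans with (1 := Hple). eapply Rle_trans. apply Rmin_l. eapply Rle_trans. apply Rmin_l. apply Rmin_l. }
  assert (Hpd2 : p < d2).
  { apply Rlt_le_trans with (1 := Hple). eapply Rle_trans. apply Rmin_l. eapply Rle_trans. apply Rmin_l. apply Rmin_r. }
  assert (Hpd3 : p < d3).
  { apply Rlt_le_trans with (1 := Hple). eapply Rle_trans. apply Rmin_l. eapply Rle_trans. apply Rmin_r. apply Rmin_l. }
  assert (Hpd4 : p < d4).
  { apply Rlt_le_trans with (1 := Hple). eapply Rle_trans. apply Rmin_l. eapply Rle_trans. apply Rmin_r. apply Rmin_r. }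
  assert (Hph : p < 1/2).
  { apply Rlt_le_trans with (1 := Hple). eapply Rle_trans. apply Rmin_r. apply Rmin_l. }
  assert (Hpd5 : p < d5).
  { apply Rlt_le_trans with (1 := Hple). eapply Rle_trans. apply Rmin_r. apply Rmin_r. }
  assert (Hlnp : ln p < - (Cst / e)).
  { unfold d5 in Hpd5. rewrite <- (ln_exp (- (Cst / e))). apply ln_increasing; auto. }
  set (D := - ln p).
  assert (HD : Cst / e < D) by (unfold D; lra).
  assert (HDe : Cst < e * D).
  { apply Rmult_lt_compat_l with (r := e) in HD; auto. unfold Rdiv in HD.
    rewrite <- Rmult_assoc, (Rmult_comm e Cst), Rmult_assoc, Rinv_r in HD; lra. }
  assert (HD0 : 0 < D).
  { assert (0 < Cst / e) by (apply Rdiv_lt_0_compat; auto). lra. }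
  specialize (H1 p (conj Hp0 Hpd1)). specialize (H2 p (conj Hp0 Hpd2)).
  specialize (H3 p (conj Hp0 Hpd3)). destruct (H4 p (conj Hp0 Hpd4)) as [L [HL HLP]].
  set (y := ln (Pf p) / ln p) in *.
  set (z := ln (INR (F p)) / - ln p) in *.
  assert (Hlnp0 : ln p < 0) by (unfold D in HD0; lra).
  assert (Hy : ln (Pf p) = - y * D) by (unfold y, D; field; lra).
  assert (Hz : ln (INR (F p)) = z * D) by (unfold z, D; field; lra).
  apply Rabs_def2 in H1. apply Rabs_def2 in H2.
  assert (HFp : 0 < INR (F p)) by lra.
  set (x := INR L * p).
  assert (Hx : c * INR (F p) * p <= x) by (unfold x; apply Rmult_le_compat_r; lra).
  assert (Hx0 : 0 < c * INR (F p) * p) by (repeat apply Rmult_lt_0_compat; lra).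
  assert (Hq := qf_lower p L ltac:(lra)). fold x in Hq.
  assert (Hq0 : 0 < qf p L).
  { eapply Rlt_le_trans; [|exact Hq]. apply Rdiv_lt_0_compat; lra. }
  assert (HPf : ln (Pf p) >= INR K * ln (qf p L)).
  { rewrite <- ln_pow by auto. apply Rle_ge. apply ln_le'; auto. apply pow_lt; auto. }
  assert (Hmain : y * D <= INR K * (1 - a) * D + 2 * INR K * e * D).
  { destruct (Rle_lt_dec 1 x) as [Hx1|Hx1].
    - assert (Hq2 : / 2 <= qf p L).
      { eapply Rle_trans; [|exact Hq]. apply Rmult_le_reg_r with (2 * (1 + x)). lra.
        unfold Rdiv. field_simplify; lra. }
      assert (Hlq : - ln 2 <= ln (qf p L)).
      { rewrite <- ln_Rinv by lra. apply ln_le'; lra. }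
      assert (ln 2 <= Cst) by (unfold Cst; assert (0 <= Rabs (ln c)) by apply Rabs_pos; lra).
      assert (INR K * ln 2 <= INR K * (e * D)) by (apply Rmult_le_compat_l; lra).
      assert (0 <= INR K * (1 - a) * D) by (apply Rmult_le_pos; [apply Rmult_le_pos|]; lra).
      assert (0 <= INR K * e * D) by (apply Rmult_le_pos; [apply Rmult_le_pos|]; lra).
      assert (INR K * (- ln 2) <= INR K * ln (qf p L)) by (apply Rmult_le_compat_l; lra).
      nra.
    - assert (Hq2 : c * INR (F p) * p * / 2 <= qf p L).
      { eapply Rle_trans; [|exact Hq]. apply Rmult_le_reg_r with (2 * (1 + x)). lra.
        unfold Rdiv. field_simplify; try lra. nra. }
      assert (Hlq : ln c + ln (INR (F p)) + ln p - ln 2 <= ln (qf p L)).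
      { eapply Rle_trans; [|apply ln_le'; [|exact Hq2]].
        - rewrite !ln_mult by (try apply Rinv_0_lt_compat; repeat apply Rmult_lt_0_compat; lra).
          rewrite ln_Rinv by lra. lra.
        - apply Rmult_lt_0_compat; lra. }
      assert (HlnC : ln 2 - ln c <= Cst) by (unfold Cst; assert (- ln c <= Rabs (ln c)) by (rewrite <- Rabs_Ropp; apply RRle_abs); lra).
      assert (Hk1 : INR K * (ln c + z * D - D - ln 2) <= INR K * ln (qf p L)).
      { apply Rmult_le_compat_l; auto. rewrite <- Hz. fold D in Hlq. unfold D in *. lra. }
      assert (Hk2 : INR K * (ln 2 - ln c) <= INR K * (e * D)) by (apply Rmult_le_compat_l; lra).
      assert (Hk3 : INR K * ((1 - z) * D) <= INR K * ((1 - a + e) * D)).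
      { apply Rmult_le_compat_l; auto. apply Rmult_le_compat_r; lra. }
      nra. }
  assert (Hy2 : y <= INR K * (1 - a) + 2 * INR K * e).
  { apply Rmult_le_reg_r with D; auto. lra. }
  nra.
Qed.

Lemma div_between u L r : (r * L <= u < S r * L)%nat -> (u / L = r)%nat.
Proof.
  intros H. symmetry. apply (Nat.div_unique u L r (u - r * L)). nia. nia.
Qed.

Lemma div_bounds u L : (0 < L)%nat -> ((u / L) * L <= u < S (u / L) * L)%nat.
Proof.
  intros HL. assert (H1 := Nat.div_mod u L ltac:(lia)).
  assert (H2 := Nat.mod_bound_pos u L ltac:(lia) HL). nia.
Qed.

Lemma in_idx_eq (Z : list point) x y : In x Z -> In y Z -> idx x Z = idx y Z -> x = y.
Proof.
  intros Hx Hy E. destruct (idx_spec _ _ Hx) as [_ Ex]. destruct (idx_spec _ _ Hy) as [_ Ey].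
  rewrite <- Ex, <- Ey, E. auto.
Qed.

Lemma row_case Z N M p W : is_finite_zero_set Z -> 0 <= p <= 1 ->
  (forall z, In z Z -> (fst z < W)%nat /\ (snd z < W)%nat) -> (1 <= W)%nat -> (W <= M)%nat -> (W <= N)%nat ->
  (qf p (N / W)) ^ (length Z) <= Pspan Z N M p.
Proof.
  intros HZ Hp HW HW1 HWM HWN.
  set (L := (N / W)%nat).
  assert (HL : (1 <= L)%nat).
  { unfold L. apply Nat.div_le_lower_bound; lia. }
  assert (HWL : (W * L <= N)%nat) by (unfold L; apply Nat.Div0.mul_div_le).
  set (bf := fun x : point => if In_dec pt_eq_dec ((fst x / L)%nat, snd x) Z
                              then Some (idx ((fst x / L)%nat, snd x) Z) else None).
  apply (Pspan_lower Z N M p bf).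
  - auto.
  - intros k Hk. destruct (nth k Z (0%nat,0%nat)) as [r c] eqn:Ez.
    assert (Hin : In (r,c) Z) by (rewrite <- Ez; apply nth_In; auto).
    destruct (HW _ Hin) as [Hr Hc]. simpl in Hr, Hc.
    exists (map (fun u => (u, c)) (seq (r * L) L)). split; [|split].
    + apply NoDup_map_NoDup_ForallPairs. intros a b _ _ E. congruence. apply seq_NoDup.
    + rewrite length_map, length_seq. auto.
    + intros x Hx. apply in_map_iff in Hx. destruct Hx as [u [<- Hu]]. apply in_seq in Hu.
      simpl. split; [|split]. nia. lia.
      unfold bf. simpl. rewrite (div_between u L r) by nia.
      destruct (In_dec pt_eq_dec (r, c) Z); [|contradiction].
      f_equal. apply idx_nth; auto. apply HZ.
  - intros A HA. apply (row_span Z L A HZ). intros r c Hin.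
    assert (Hk : (idx (r,c) Z < length Z)%nat) by (apply idx_spec; auto).
    destruct (HA _ Hk) as [[u v] [Hb Hx]]. unfold bf in Hb. simpl in Hb.
    destruct (In_dec pt_eq_dec ((u / L)%nat, v) Z) as [Hi|Hi]; [|discriminate].
    inversion Hb as [Hb2]. apply in_idx_eq in Hb2; auto. inversion Hb2; subst.
    exists u. split; auto. apply div_bounds. lia.
Qed.

Lemma col_case Z N M p W : is_finite_zero_set Z -> 0 <= p <= 1 ->
  (forall z, In z Z -> (fst z < W)%nat /\ (snd z < W)%nat) -> (1 <= W)%nat -> (W <= N)%nat -> (W <= M)%nat ->
  (qf p (M / W)) ^ (length Z) <= Pspan Z N M p.
Proof.
  intros HZ Hp HW HW1 HWN HWM.
  set (L := (M / W)%nat).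
  assert (HL : (1 <= L)%nat).
  { unfold L. apply Nat.div_le_lower_bound; lia. }
  assert (HWL : (W * L <= M)%nat) by (unfold L; apply Nat.Div0.mul_div_le).
  set (bf := fun x : point => if In_dec pt_eq_dec (fst x, (snd x / L)%nat) Z
                              then Some (idx (fst x, (snd x / L)%nat) Z) else None).
  apply (Pspan_lower Z N M p bf).
  - auto.
  - intros k Hk. destruct (nth k Z (0%nat,0%nat)) as [r c] eqn:Ez.
    assert (Hin : In (r,c) Z) by (rewrite <- Ez; apply nth_In; auto).
    destruct (HW _ Hin) as [Hr Hc]. simpl in Hr, Hc.
    exists (map (fun v => (r, v)) (seq (c * L) L)). split; [|split].
    + apply NoDup_map_NoDup_ForallPairs. intros a b _ _ E. congruence. apply seq_NoDup.
    + rewrite length_map, length_seq. auto.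
    + intros x Hx. apply in_map_iff in Hx. destruct Hx as [v [<- Hv]]. apply in_seq in Hv.
      simpl. split; [|split]. lia. nia.
      unfold bf. simpl. rewrite (div_between v L c) by nia.
      destruct (In_dec pt_eq_dec (r, c) Z); [|contradiction].
      f_equal. apply idx_nth; auto. apply HZ.
  - intros A HA. apply (col_span Z L A HZ). intros r c Hin.
    assert (Hk : (idx (r,c) Z < length Z)%nat) by (apply idx_spec; auto).
    destruct (HA _ Hk) as [[u v] [Hb Hx]]. unfold bf in Hb. simpl in Hb.
    destruct (In_dec pt_eq_dec (u, (v / L)%nat) Z) as [Hi|Hi]; [|discriminate].
    inversion Hb as [Hb2]. apply in_idx_eq in Hb2; auto. inversion Hb2; subst.
    exists v. split; auto. apply div_bounds. lia.
Qed.

Lemma choose_fun (P : nat -> nat -> Prop) g :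
  (forall i, (i < g)%nat -> exists u, P i u) -> exists f : nat -> nat, forall i, (i < g)%nat -> P i (f i).
Proof.
  intros H.
  assert (H' : forall i, exists u, (i < g)%nat -> P i u).
  { intros i. destruct (Nat.lt_ge_cases i g) as [Hi|Hi].
    - destruct (H i Hi) as [u Hu]. exists u. auto.
    - exists 0%nat. intros; lia. }
  exists (fun i => proj1_sig (constructive_indefinite_description _ (H' i))).
  intros i Hi. destruct (constructive_indefinite_description _ (H' i)) as [u Hu]. simpl. auto.
Qed.

Lemma gamma_case Z N M p Sl B : is_finite_zero_set Z -> 0 <= p <= 1 ->
  spans Z (set_of_list Sl) ->
  (forall s, In s Sl -> (fst s < B)%nat /\ (snd s < B)%nat) ->
  (B + S (length Sl) <= Nat.min N M)%nat ->
  (qf p ((Nat.min N M - B) / S (length Sl))) ^ (2 * length Sl) <= Pspan Z N M p.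
Proof.
  intros HZ Hp Hsp HS Hn.
  set (g := length Sl) in *.
  set (n := Nat.min N M) in *.
  assert (HnN : (n <= N)%nat) by (unfold n; lia).
  assert (HnM : (n <= M)%nat) by (unfold n; lia).
  set (L := ((n - B) / S g)%nat).
  assert (HL : (1 <= L)%nat).
  { unfold L. apply Nat.div_le_lower_bound; lia. }
  assert (HgL : (S g * L <= n - B)%nat) by (unfold L; apply Nat.Div0.mul_div_le).
  set (d := (0%nat, 0%nat) : point).
  assert (Hnth : forall i, (i < g)%nat -> (fst (nth i Sl d) < B)%nat /\ (snd (nth i Sl d) < B)%nat).
  { intros i Hi. apply HS. apply nth_In. auto. }
  set (bf := fun x : point =>
    if ((B <=? fst x) && ((fst x - B) / L <? g) && (snd (nth ((fst x - B) / L) Sl d) =? snd x))%bool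
    then Some (2 * ((fst x - B) / L))%nat
    else if ((B <=? snd x) && ((snd x - B) / L <? g) && (fst (nth ((snd x - B) / L) Sl d) =? fst x))%bool
    then Some (S (2 * ((snd x - B) / L)))%nat else None).
  apply (Pspan_lower Z N M p bf).
  - auto.
  - intros k Hk. destruct (Nat.Even_or_Odd k) as [[i Hi]|[i Hi]]; subst k.
    + assert (Hig : (i < g)%nat) by lia.
      destruct (Hnth i Hig) as [Hf Hs].
      exists (map (fun u => (u, snd (nth i Sl d))) (seq (B + i * L) L)). split; [|split].
      * apply NoDup_map_NoDup_ForallPairs. intros a b _ _ E. congruence. apply seq_NoDup.
      * rewrite length_map, length_seq. auto.
      * intros x Hx. apply in_map_iff in Hx. destruct Hx as [u [<- Hu]]. apply in_seq in Hu.
        simpl. split; [|split]. nia. lia.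
        unfold bf. simpl. rewrite (div_between (u - B) L i) by nia.
        replace (B <=? u)%nat with true by (symmetry; apply Nat.leb_le; lia).
        replace (i <? g)%nat with true by (symmetry; apply Nat.ltb_lt; lia).
        rewrite Nat.eqb_refl. simpl. reflexivity.
    + assert (Hig : (i < g)%nat) by lia.
      destruct (Hnth i Hig) as [Hf Hs].
      exists (map (fun v => (fst (nth i Sl d), v)) (seq (B + i * L) L)). split; [|split].
      * apply NoDup_map_NoDup_ForallPairs. intros a b _ _ E. congruence. apply seq_NoDup.
      * rewrite length_map, length_seq. auto.
      * intros x Hx. apply in_map_iff in Hx. destruct Hx as [v [<- Hv]]. apply in_seq in Hv.
        simpl. split; [|split]. lia. nia.
        unfold bf. simpl.
        replace (B <=? fst (nth i Sl d))%nat with false by (symmetry; apply Nat.leb_gt; lia).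
        simpl. rewrite (div_between (v - B) L i) by nia.
        replace (B <=? v)%nat with true by (symmetry; apply Nat.leb_le; lia).
        replace (i <? g)%nat with true by (symmetry; apply Nat.ltb_lt; lia).
        rewrite Nat.eqb_refl. simpl. f_equal. lia.
  - intros A HA.
    assert (Hrow : forall i, (i < g)%nat -> exists u, (B <= u)%nat /\ ((u - B) / L)%nat = i /\ A (u, snd (nth i Sl d))).
    { intros i Hi. destruct (HA (2 * i)%nat ltac:(lia)) as [[u v] [Hb Ax]].
      unfold bf in Hb. simpl in Hb.
      destruct ((B <=? u) && ((u - B) / L <? g) && (snd (nth ((u - B) / L) Sl d) =? v))%bool eqn:E1.
      - apply andb_prop in E1. destruct E1 as [E1 E3]. apply andb_prop in E1. destruct E1 as [E1 E2].
        apply Nat.leb_le in E1. apply Nat.eqb_eq in E3. inversion Hb as [Hb2].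
        assert (Ei : ((u - B) / L)%nat = i) by lia. rewrite Ei in E3.
        exists u. split; auto. split; auto. rewrite E3. auto.
      - destruct ((B <=? v) && ((v - B) / L <? g) && (fst (nth ((v - B) / L) Sl d) =? u))%bool;
        inversion Hb. lia. }
    assert (Hcol : forall i, (i < g)%nat -> exists v, (B <= v)%nat /\ ((v - B) / L)%nat = i /\ A (fst (nth i Sl d), v)).
    { intros i Hi. destruct (HA (S (2 * i))%nat ltac:(lia)) as [[u v] [Hb Ax]].
      unfold bf in Hb. simpl in Hb.
      destruct ((B <=? u) && ((u - B) / L <? g) && (snd (nth ((u - B) / L) Sl d) =? v))%bool eqn:E1.
      - inversion Hb. lia.
      - destruct ((B <=? v) && ((v - B) / L <? g) && (fst (nth ((v - B) / L) Sl d) =? u))%bool eqn:E2;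
        [|discriminate].
        apply andb_prop in E2. destruct E2 as [E2 E4]. apply andb_prop in E2. destruct E2 as [E2 E3].
        apply Nat.leb_le in E2. apply Nat.eqb_eq in E4. inversion Hb as [Hb2].
        assert (Ei : ((v - B) / L)%nat = i) by lia. rewrite Ei in E4.
        exists v. split; auto. split; auto. rewrite E4. auto. }
    destruct (choose_fun _ g Hrow) as [cf Hcf].
    destruct (choose_fun _ g Hcol) as [rf Hrf].
    apply (U_span Z Sl B cf rf A HZ Hsp HS).
    + intros i Hi. destruct (Hcf i Hi) as [H1 _]. destruct (Hrf i Hi) as [H2 _]. auto.
    + intros i j Hi Hj E. destruct (Hcf i Hi) as [_ [H1 _]]. destruct (Hcf j Hj) as [_ [H2 _]].
      rewrite <- H1, <- H2, E. auto.
    + intros i j Hi Hj E. destruct (Hrf i Hi) as [_ [H1 _]]. destruct (Hrf j Hj) as [_ [H2 _]].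
      rewrite <- H1, <- H2, E. auto.
    + intros i Hi. destruct (Hcf i Hi) as [_ [_ H1]]. destruct (Hrf i Hi) as [_ [_ H2]]. auto.
Qed.

Lemma div_lower_nat N W : (1 <= W)%nat -> (W <= N)%nat -> (N <= 2 * W * (N / W))%nat.
Proof.
  intros H1 H2. assert (H3 := Nat.div_mod N W ltac:(lia)).
  assert (H4 := Nat.mod_bound_pos N W ltac:(lia) ltac:(lia)).
  assert (H5 : (1 <= N / W)%nat) by (apply Nat.div_le_lower_bound; lia). nia.
Qed.

Lemma INR_min a b : INR (Nat.min a b) = Rmin (INR a) (INR b).
Proof.
  destruct (Nat.le_ge_cases a b) as [H|H].
  - rewrite Nat.min_l by auto. rewrite Rmin_left; auto. apply le_INR; auto.
  - rewrite Nat.min_r by auto. rewrite Rmin_right; auto. apply le_INR; auto.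
Qed.

Lemma ln_min_div x y D : 0 < x -> 0 < y -> 0 < D -> ln (Rmin x y) / D = Rmin (ln x / D) (ln y / D).
Proof.
  intros Hx Hy HD. unfold Rdiv.
  assert (0 < / D) by (apply Rinv_0_lt_compat; auto).
  destruct (Rle_dec x y) as [Hxy|Hxy].
  - rewrite Rmin_left by auto. rewrite Rmin_left; auto. apply Rmult_le_compat_r; [lra|]. apply ln_le'; auto.
  - rewrite Rmin_right by lra. rewrite Rmin_right; auto. apply Rmult_le_compat_r; [lra|]. apply ln_le'; lra.
Qed.

Lemma Rmin_close x y a b e : Rabs (x - a) < e -> Rabs (y - b) < e -> Rabs (Rmin x y - Rmin a b) < e.
Proof.
  intros H1 H2. apply Rabs_def2 in H1. apply Rabs_def2 in H2. apply Rabs_def1;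
  unfold Rmin; destruct (Rle_dec x y); destruct (Rle_dec a b); lra.
Qed.

Lemma eventually2 (P Q : R -> Prop) :
  (exists d, 0 < d /\ forall p, 0 < p < d -> P p) ->
  (exists d, 0 < d /\ forall p, 0 < p < d -> Q p) ->
  exists d, 0 < d /\ forall p, 0 < p < d -> P p /\ Q p.
Proof.
  intros [d1 [H1 P1]] [d2 [H2 P2]]. exists (Rmin d1 d2). split. apply Rmin_pos; auto.
  intros p Hp. assert (Rmin d1 d2 <= d1) by apply Rmin_l. assert (Rmin d1 d2 <= d2) by apply Rmin_r.
  split; [apply P1|apply P2]; lra.
Qed.

Lemma small_p : exists d, 0 < d /\ forall p, 0 < p < d -> p < 1.
Proof. exists 1. split. lra. intros; lra. Qed.

Theorem mainTheorem15 (Z : list point) (alpha beta : R)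
  (N M : R -> nat) (I : R) :
  is_finite_zero_set Z ->
  0 <= alpha <= 1 -> 0 <= beta <= 1 ->
  to_infty0 (fun p => INR (N p)) ->
  to_infty0 (fun p => INR (M p)) ->
  lim0 (fun p => ln (INR (N p)) / (- ln p)) alpha ->
  lim0 (fun p => ln (INR (M p)) / (- ln p)) beta ->
  lim0 (fun p => ln (Pspan Z (N p) (M p) p) / ln p) I ->
  I <= (1 - Rmax alpha beta) * INR (length Z) /\
  (forall g, is_gamma Z g -> I <= 2 * (1 - Rmin alpha beta) * INR g).
Proof.
  intros HZ Ha Hb HN HM HlN HlM HlP.
  destruct (list_bound Z) as [Bd HB].
  set (W := S Bd).
  assert (HW : forall z, In z Z -> (fst z < W)%nat /\ (snd z < W)%nat).
  { intros z Hz. destruct (HB z Hz). unfold W. lia. }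
  assert (HW1 : (1 <= W)%nat) by (unfold W; lia).
  assert (HWpos : 0 < INR W) by (apply lt_0_INR; lia).
  split.
  - destruct (Rle_dec beta alpha) as [Hab|Hab].
    + rewrite Rmax_left by auto. rewrite Rmult_comm.
      apply (analytic N (fun p => Pspan Z (N p) (M p) p) alpha I (/ (2 * INR W)) (length Z)); auto.
      apply Rinv_0_lt_compat; lra. lra.
      destruct (eventually2 _ _ (HN (2 * INR W)) (eventually2 _ _ (HM (INR W)) small_p)) as [d [Hd Hp]].
      exists d. split; auto. intros p Hp0. destruct (Hp p Hp0) as [H1 [H2 H3]].
      assert (HWN : (W <= N p)%nat) by (apply INR_le; lra).
      assert (HWM : (W <= M p)%nat) by (apply INR_le; lra).
      exists (N p / W)%nat. split.
      * assert (E := div_lower_nat (N p) W HW1 HWN). apply le_INR in E.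
        rewrite !mult_INR in E. replace (INR 2) with 2 in E by (simpl; ring).
        apply Rmult_le_reg_l with (2 * INR W). lra.
        rewrite <- Rmult_assoc, Rinv_r by lra. lra.
      * apply row_case; auto. lra.
    + rewrite Rmax_right by lra. rewrite Rmult_comm.
      apply (analytic M (fun p => Pspan Z (N p) (M p) p) beta I (/ (2 * INR W)) (length Z)); auto.
      apply Rinv_0_lt_compat; lra. lra.
      destruct (eventually2 _ _ (HM (2 * INR W)) (eventually2 _ _ (HN (INR W)) small_p)) as [d [Hd Hp]].
      exists d. split; auto. intros p Hp0. destruct (Hp p Hp0) as [H1 [H2 H3]].
      assert (HWM : (W <= M p)%nat) by (apply INR_le; lra).
      assert (HWN : (W <= N p)%nat) by (apply INR_le; lra).
      exists (M p / W)%nat. split.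
      * assert (E := div_lower_nat (M p) W HW1 HWM). apply le_INR in E.
        rewrite !mult_INR in E. replace (INR 2) with 2 in E by (simpl; ring).
        apply Rmult_le_reg_l with (2 * INR W). lra.
        rewrite <- Rmult_assoc, Rinv_r by lra. lra.
      * apply col_case; auto. lra.
  - intros g [[Sl [Hnd [Hlen Hsp]]] _].
    destruct (list_bound Sl) as [B HB2].
    set (F := fun p => Nat.min (N p) (M p)).
    set (G := INR (S g)).
    assert (HG : 0 < G) by (apply lt_0_INR; lia).
    replace (2 * (1 - Rmin alpha beta) * INR g) with (INR (2 * length Sl) * (1 - Rmin alpha beta))
      by (rewrite mult_INR, Hlen; simpl; ring).
    apply (analytic F (fun p => Pspan Z (N p) (M p) p) (Rmin alpha beta) I (/ (4 * G)) (2 * length Sl)); auto.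
    + apply Rinv_0_lt_compat; lra.
    + assert (Rmin alpha beta <= alpha) by apply Rmin_l. lra.
    + intros K. destruct (eventually2 _ _ (HN K) (HM K)) as [d [Hd Hp]].
      exists d. split; auto. intros p Hp0. destruct (Hp p Hp0). unfold F. rewrite INR_min.
      unfold Rmin. destruct (Rle_dec _ _); auto.
    + intros e He. destruct (eventually2 _ _ (HlN e He) (eventually2 _ _ (HlM e He)
         (eventually2 _ _ (HN 1) (eventually2 _ _ (HM 1) small_p)))) as [d [Hd Hp]].
      exists d. split; auto. intros p Hp0. destruct (Hp p Hp0) as [H1 [H2 [H3 [H4 H5]]]].
      unfold F. rewrite INR_min. rewrite ln_min_div; try lra.
      apply Rmin_close; auto.
      assert (ln p < 0). { rewrite <- ln_1. apply ln_increasing; lra. } lra.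
    + destruct (eventually2 _ _ (HN (INR (2 * B + 2 * S g))) (eventually2 _ _ (HM (INR (2 * B + 2 * S g))) small_p))
        as [d [Hd Hp]].
      exists d. split; auto. intros p Hp0. destruct (Hp p Hp0) as [H1 [H2 H3]].
      assert (Hn1 : (2 * B + 2 * S g <= F p)%nat).
      { unfold F. assert (E1 : (2 * B + 2 * S g <= N p)%nat) by (apply INR_le; lra). assert (E2 : (2 * B + 2 * S g <= M p)%nat) by (apply INR_le; lra). lia. }
      exists ((F p - B) / S g)%nat. split.
      * assert (E := div_lower_nat (F p - B) (S g) ltac:(lia) ltac:(lia)).
        assert (E2 : (F p <= 4 * S g * ((F p - B) / S g))%nat) by lia.
        apply le_INR in E2. rewrite !mult_INR in E2. fold G in E2. replace (INR 4) with 4 in E2 by (simpl; ring).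
        apply Rmult_le_reg_l with (4 * G). lra.
        rewrite <- Rmult_assoc, Rinv_r by lra. lra.
      * rewrite <- Hlen. unfold F. apply gamma_case; auto. lra.
        unfold F in Hn1. lia.
Qed.
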